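(* Let $C_1,C_2,\gamma$ be positive real numbers and let $(t_n)_{n\ge1}$ be a sequence of real numbers with $C_1n^\gamma\le t_n\le C_2 n^\gamma$ for all $n\ge1$. Then there exist a constant $C>0$ and an integer $n_0\ge 2$ such that the set $$\bigcap_{n\ge n_0}\Bigl\{\xi\in\mathbb{R}:\ \|\xi t_n\|>\frac{C}{n\log n}\Bigr\}$$ has Hausdorff dimension $1$.
   Context: For a real number $x$, $\|x\|$ denotes the distance from $x$ to the nearest integer. *)

(* Defs.v *)
From Stdlib Require Import Reals Lra.
Open Scope R_scope.

Definition dist_int (x : R) : R := Rmin (frac_part x) (1 - frac_part x).

Definition diam_le (U : R -> Prop) (d : R) : Prop :=
  forall x y, U x -> U y -> Rabs (x - y) <= d.

(* The s-dimensional Hausdorff measure of E is zero: for every delta > 0,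
   H^s_delta(E) = inf { sum_n (diam U_n)^s : E ⊆ ∪ U_n, diam U_n <= delta } = 0.
   (Diameters are bounded by positive radii r_n; for s > 0 this gives the same
   infimum.) *)
Definition hausdorff_null (s : R) (E : R -> Prop) : Prop :=
  forall delta eps, 0 < delta -> 0 < eps ->
  exists (U : nat -> R -> Prop) (r : nat -> R),
    (forall n, 0 < r n <= delta /\ diam_le (U n) (r n)) /\
    (forall x, E x -> exists n, U n x) /\
    (forall N, sum_f_R0 (fun n => Rpower (r n) s) N < eps).

Definition hausdorff_dim (E : R -> Prop) (d : R) : Prop :=
  (forall s, 0 <= s -> hausdorff_null s E -> d <= s) /\
  (forall b, (forall s, 0 <= s -> hausdorff_null s E -> b <= s) -> b <= d).

(* Main.v *)
Require Import Defs.
From Stdlib Require Import Reals Lra Lia ClassicalEpsilon Arith List.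
Open Scope R_scope.

Fixpoint sm (f : nat -> R) (n : nat) : R :=
  match n with O => 0 | S k => sm f k + f k end.

Lemma sm_ext f g n : (forall i, (i < n)%nat -> f i = g i) -> sm f n = sm g n.
Proof. induction n; simpl; intros H; auto. rewrite IHn by (intros; apply H; lia). rewrite H by lia. auto. Qed.

Lemma sm_le f g n : (forall i, (i < n)%nat -> f i <= g i) -> sm f n <= sm g n.
Proof. induction n; simpl; intros H; [lra|]. assert (f n <= g n) by (apply H; lia).
  assert (sm f n <= sm g n) by (apply IHn; intros; apply H; lia). lra. Qed.

Lemma sm_plus f g n : sm (fun i => f i + g i) n = sm f n + sm g n.
Proof. induction n; simpl; [lra|]. rewrite IHn; lra. Qed.

Lemma sm_minus f g n : sm (fun i => f i - g i) n = sm f n - sm g n.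
Proof. induction n; simpl; [lra|]. rewrite IHn; lra. Qed.

Lemma sm_scal c f n : sm (fun i => c * f i) n = c * sm f n.
Proof. induction n; simpl; [lra|]. rewrite IHn; lra. Qed.

Lemma sm_const c n : sm (fun _ => c) n = INR n * c.
Proof. induction n; simpl sm; [simpl; lra|]. rewrite IHn, S_INR; lra. Qed.

Lemma sm_nonneg f n : (forall i, (i < n)%nat -> 0 <= f i) -> 0 <= sm f n.
Proof. intros H. replace 0 with (sm (fun _ => 0) n). apply sm_le; auto.
  rewrite sm_const; lra. Qed.

Lemma sm_add f m n : sm f (m + n) = sm f m + sm (fun i => f (m + i)%nat) n.
Proof. induction n; simpl. rewrite Nat.add_0_r; lra.
  rewrite Nat.add_succ_r; simpl; rewrite IHn; lra. Qed.

Lemma sm_split f m R : sm f (m * R) = sm (fun p => sm (fun i => f (p * R + i)%nat) R) m.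
Proof. induction m; simpl; auto. rewrite <- IHm.
  replace (R + m * R)%nat with (m * R + R)%nat by lia. apply sm_add. Qed.

Lemma sm_swap (f : nat -> nat -> R) m n :
  sm (fun i => sm (fun j => f i j) n) m = sm (fun j => sm (fun i => f i j) m) n.
Proof. induction m; simpl. rewrite sm_const; lra.
  rewrite IHm. rewrite <- sm_plus. apply sm_ext. intros; simpl; auto. Qed.

Lemma sm_telescope F n : sm (fun i => F (S i) - F i) n = F n - F O.
Proof. induction n; simpl; [lra|]. rewrite IHn; lra. Qed.

Lemma sm_single f n i : (forall j, (j < n)%nat -> 0 <= f j) -> (i < n)%nat -> f i <= sm f n.
Proof. induction n; intros H Hi; [lia|]. simpl.
  destruct (Nat.eq_dec i n). subst. assert (0 <= sm f n) by (apply sm_nonneg; intros; apply H; lia). lra.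
  assert (f i <= sm f n) by (apply IHn; [intros; apply H; lia| lia]). assert (0 <= f n) by (apply H; lia). lra. Qed.

Definition ind (P : Prop) : R := if excluded_middle_informative P then 1 else 0.

Lemma ind_T (P : Prop) : P -> ind P = 1.
Proof. unfold ind; destruct (excluded_middle_informative P); tauto. Qed.
Lemma ind_F (P : Prop) : ~ P -> ind P = 0.
Proof. unfold ind; destruct (excluded_middle_informative P); tauto. Qed.
Lemma ind_01 (P : Prop) : 0 <= ind P <= 1.
Proof. unfold ind; destruct (excluded_middle_informative P); lra. Qed.
Lemma ind_imp (P Q : Prop) : (P -> Q) -> ind P <= ind Q.
Proof. intros H. unfold ind; destruct (excluded_middle_informative P), (excluded_middle_informative Q); try lra; tauto. Qed.
Lemma ind_and_le (P Q : Prop) x : 0 <= x -> (P -> ind Q * x <= x) -> ind (P /\ Q) * x <= ind P * x.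
Proof. intros; unfold ind; destruct (excluded_middle_informative (P /\ Q)), (excluded_middle_informative P); try lra; tauto. Qed.

Lemma count_int_aux a b Q :
  sm (fun i => ind (a <= INR i <= b)) Q <= Rmax 0 (Rmin b (INR Q - 1) - a + 1).
Proof.
  induction Q; simpl sm.
  - unfold Rmax; destruct (Rle_dec 0 _); lra.
  - destruct (classic (a <= INR Q <= b)) as [H|H].
    + rewrite ind_T by auto. rewrite S_INR.
      assert (Rmin b (INR Q - 1) = INR Q - 1) by (apply Rmin_right; lra).
      assert (Rmin b (INR Q + 1 - 1) = INR Q) by (replace (INR Q + 1 - 1) with (INR Q) by ring; apply Rmin_right; lra).
      rewrite H0 in IHQ. rewrite H1.
      unfold Rmax in *. destruct (Rle_dec 0 (INR Q - 1 - a + 1)), (Rle_dec 0 (INR Q - a + 1)); lra.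
    + rewrite ind_F by auto. rewrite S_INR.
      assert (Rmin b (INR Q - 1) <= Rmin b (INR Q + 1 - 1)).
      { unfold Rmin; destruct (Rle_dec b (INR Q - 1)), (Rle_dec b (INR Q + 1 - 1)); lra. }
      unfold Rmax in *. destruct (Rle_dec 0 (Rmin b (INR Q - 1) - a + 1)), (Rle_dec 0 (Rmin b (INR Q + 1 - 1) - a + 1)); lra.
Qed.

Lemma count_int a b Q : a <= b + 1 ->
  sm (fun i => ind (a <= INR i <= b)) Q <= b - a + 1.
Proof. intros H. eapply Rle_trans. apply count_int_aux.
  unfold Rmax, Rmin. destruct (Rle_dec b (INR Q - 1)), (Rle_dec 0 _); lra. Qed.

Definition fl (x : R) : R := IZR (Int_part x).
Lemma fl_le x : fl x <= x.
Proof. unfold fl; destruct (base_Int_part x); lra. Qed.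
Lemma fl_gt x : x - 1 < fl x.
Proof. unfold fl; destruct (base_Int_part x); lra. Qed.
Lemma fl_int_le (m : Z) x : IZR m <= x -> IZR m <= fl x.
Proof. intros H. unfold fl. pose proof (fl_gt x). unfold fl in H0.
  assert (IZR m < IZR (Int_part x) + 1) by lra. rewrite <- plus_IZR in H1.
  apply lt_IZR in H1. apply IZR_le. lia. Qed.
Lemma fl_mono x y : x <= y -> fl x <= fl y.
Proof. intros. apply fl_int_le. pose proof (fl_le x). unfold fl in *. lra. Qed.

Lemma ind_window_le x0 h w i : 0 < h -> 0 <= w ->
  ind (exists m : Z, x0 + INR i * h <= IZR m <= x0 + INR i * h + w)
  <= fl (x0 + INR i * h + w) - fl (x0 + INR i * h - h).
Proof.
  intros Hh Hw. destruct (classic (exists m : Z, x0 + INR i * h <= IZR m <= x0 + INR i * h + w)) as [[m Hm]|H].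
  - rewrite ind_T by eauto.
    assert (IZR m <= fl (x0 + INR i * h + w)) by (apply fl_int_le; lra).
    assert (fl (x0 + INR i * h - h) < IZR m) by (pose proof (fl_le (x0 + INR i * h - h)); lra).
    unfold fl in *. apply lt_IZR in H0.
    assert (Int_part (x0 + INR i * h - h) + 1 <= m)%Z by lia.
    apply IZR_le in H1. rewrite plus_IZR in H1. lra.
  - rewrite ind_F by auto. assert (fl (x0 + INR i * h - h) <= fl (x0 + INR i * h + w)) by (apply fl_mono; lra). lra.
Qed.

Lemma window_count (x0 h w : R) (M p : nat) : 0 < h -> 0 <= w -> w <= INR p * h ->
  sm (fun i => ind (exists m : Z, x0 + INR i * h <= IZR m <= x0 + INR i * h + w)) M
  <= (INR p + 1) * (INR M * h + 1).
Proof.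
  intros Hh Hw Hp.
  set (Phi := fun j : nat => fl (x0 + (INR j - 1) * h)).
  eapply Rle_trans with (sm (fun i => sm (fun r => Phi (i + r + 1)%nat - Phi (i + r)%nat) (S p)) M).
  - apply sm_le; intros i Hi. eapply Rle_trans. apply ind_window_le; auto.
    replace (sm (fun r => Phi (i + r + 1)%nat - Phi (i + r)%nat) (S p)) with (Phi (i + S p)%nat - Phi i).
    + unfold Phi. rewrite !plus_INR, S_INR.
      replace (x0 + (INR i - 1) * h) with (x0 + INR i * h - h) by ring.
      assert (fl (x0 + INR i * h + w) <= fl (x0 + (INR i + (INR p + 1) - 1) * h)) by (apply fl_mono; nra). lra.
    + replace (Phi i) with (Phi (i+0)%nat) by (f_equal; lia).
      rewrite <- (sm_telescope (fun r => Phi (i + r)%nat) (S p)). apply sm_ext; intros. simpl.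
      f_equal; f_equal; lia.
  - rewrite sm_swap. replace ((INR p + 1) * (INR M * h + 1)) with (sm (fun _ => INR M * h + 1) (S p))
      by (rewrite sm_const, S_INR; ring).
    apply sm_le; intros r Hr.
    rewrite (sm_ext _ (fun i => Phi (S (i + r)) - Phi (i + r)%nat)) by (intros; f_equal; f_equal; lia).
    rewrite (sm_telescope (fun i => Phi (i + r)%nat)). simpl. unfold Phi.
    pose proof (fl_le (x0 + (INR (M + r) - 1) * h)). pose proof (fl_gt (x0 + (INR r - 1) * h)).
    rewrite plus_INR in *. nra.
Qed.

Lemma ln_le' x y : 0 < x -> x <= y -> ln x <= ln y.
Proof. intros. destruct (Req_dec x y). subst; lra. left; apply ln_increasing; lra. Qed.

Lemma ln_diff x y : 0 < y -> y <= x -> (x - y) / x <= ln x - ln y.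
Proof. intros Hy Hxy.
  assert (Hx : 0 < x) by lra.
  pose proof (exp_ineq1_le (ln (y / x))). rewrite exp_ln in H by (apply Rdiv_lt_0_compat; lra).
  unfold Rdiv in H. rewrite ln_mult in H by (try apply Rinv_0_lt_compat; lra). rewrite ln_Rinv in H by lra.
  replace ((x - y) / x) with (1 - y * / x) by (field; lra). lra. Qed.

Lemma ln_le_lin x : 0 < x -> ln x <= x - 1.
Proof. intros. pose proof (exp_ineq1_le (ln x)). rewrite exp_ln in H0 by lra. lra. Qed.

Lemma ln_pos' x : 1 < x -> 0 < ln x.
Proof. intros. rewrite <- ln_1. apply ln_increasing; lra. Qed.

Lemma term_lnln (n : nat) : (3 <= n)%nat ->
  1 / (INR n * ln (INR n)) <= ln (ln (INR n)) - ln (ln (INR n - 1)).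
Proof.
  intros Hn. assert (H3 : 3 <= INR n) by (replace 3 with (INR 3) by (simpl; lra); apply le_INR; auto).
  assert (L1 : 0 < ln (INR n - 1)) by (apply ln_pos'; lra).
  assert (L2 : ln (INR n - 1) <= ln (INR n)) by (apply ln_le'; lra).
  pose proof (ln_diff (ln (INR n)) (ln (INR n - 1)) L1 L2).
  pose proof (ln_diff (INR n) (INR n - 1) ltac:(lra) ltac:(lra)).
  replace ((INR n - (INR n - 1)) / INR n) with (1 / INR n) in H0 by (field; lra).
  eapply Rle_trans; [|apply H].
  replace (1 / (INR n * ln (INR n))) with ((1 / INR n) / ln (INR n)) by (field; lra).
  unfold Rdiv. apply Rmult_le_compat_r. left; apply Rinv_0_lt_compat; lra.
  unfold Rdiv in H0. lra.
Qed.

Lemma band_sum (a k : nat) : (3 <= a)%nat ->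
  sm (fun i => 1 / (INR (a + i) * ln (INR (a + i)))) k
  <= ln (ln (INR (a + k) - 1)) - ln (ln (INR a - 1)).
Proof.
  intros Ha. induction k.
  - simpl. rewrite Nat.add_0_r. lra.
  - simpl sm. pose proof (term_lnln (a + k) ltac:(lia)).
    replace (INR (a + S k) - 1) with (INR (a + k)) by (rewrite Nat.add_succ_r, S_INR; ring).
    lra.
Qed.

Section Tree.
Variable Rb : nat -> nat.
Hypothesis HR : forall j, (4 <= Rb (S j))%nat.

Fixpoint Qn j : nat := match j with 0 => 1%nat | S j => (Qn j * Rb (S j))%nat end.

Variable Z : nat -> nat -> Prop.
Hypothesis HZ0 : forall a, ~ Z 0 a.
Hypothesis HZ1 : forall a, ~ Z 1 a.
Hypothesis HZ : forall j u, (u < Qn j)%nat ->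
  sm (fun i => ind (Z (S (S j)) (u * (Rb (S j) * Rb (S (S j))) + i)%nat)) (Rb (S j) * Rb (S (S j)))
  <= INR (Rb (S j) * Rb (S (S j))) / 8.

Definition good j a := ~ Z j a /\
  sm (fun i => ind (Z (S j) (a * Rb (S j) + i)%nat)) (Rb (S j)) <= INR (Rb (S j)) / 2.

Fixpoint T j a : Prop := match j with 0 => a = 0%nat | S j' => T j' (a / Rb (S j'))%nat /\ good (S j') a end.

Lemma Rb_pos j : (0 < Rb (S j))%nat.
Proof. specialize (HR j); lia. Qed.

Lemma Qn_pos j : (0 < Qn j)%nat.
Proof. induction j; simpl; auto. pose proof (Rb_pos j). nia. Qed.

Lemma T_lt j a : T j a -> (a < Qn j)%nat.
Proof. revert a; induction j; simpl; intros a H. lia.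
  destruct H as [H _]. apply IHj in H. pose proof (Rb_pos j).
  pose proof (Nat.div_mod a (Rb (S j)) ltac:(lia)). pose proof (Nat.mod_upper_bound a (Rb (S j)) ltac:(lia)).
  nia. Qed.

Lemma good0 : good 0 0.
Proof. split. apply HZ0. rewrite (sm_ext _ (fun _ => 0)). rewrite sm_const.
  pose proof (pos_INR (Rb 1)). lra. intros; apply ind_F; apply HZ1. Qed.

Lemma T_good j a : T j a -> good j a.
Proof. destruct j; simpl; intros H. subst; apply good0. tauto. Qed.

Lemma good_children j u : (u < Qn j)%nat -> good j u ->
  INR (Rb (S j)) / 4 <= sm (fun i => ind (good (S j) (u * Rb (S j) + i)%nat)) (Rb (S j)).
Proof.
  intros Hu [_ Hg].
  set (R1 := Rb (S j)). set (R2 := Rb (S (S j))).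
  assert (HR2 : 4 <= INR R2) by (replace 4 with (INR 4) by (simpl; lra); apply le_INR; apply HR).
  set (X := fun i => sm (fun k => ind (Z (S (S j)) ((u * R1 + i) * R2 + k)%nat)) R2).
  assert (HX : forall i, 0 <= X i) by (intros; apply sm_nonneg; intros; apply ind_01).
  assert (Hpt : forall i, 1 - ind (Z (S j) (u * R1 + i)%nat) - (2 / INR R2) * X i
             <= ind (good (S j) (u * R1 + i)%nat)).
  { intros i. destruct (classic (good (S j) (u * R1 + i)%nat)) as [G|G].
    - rewrite (ind_T (good _ _)) by auto. pose proof (ind_01 (Z (S j) (u * R1 + i)%nat)). specialize (HX i).
      assert (0 <= 2 / INR R2 * X i) by (apply Rmult_le_pos; auto; apply Rlt_le, Rdiv_lt_0_compat; lra). lra.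
    - rewrite (ind_F (good _ _)) by auto. unfold good in G. apply not_and_or in G. destruct G as [G|G].
      + apply NNPP in G. rewrite (ind_T (Z _ _)) by auto. specialize (HX i).
        assert (0 <= 2 / INR R2 * X i) by (apply Rmult_le_pos; auto; apply Rlt_le, Rdiv_lt_0_compat; lra). lra.
      + apply Rnot_le_lt in G. fold R2 in G.
        replace (fun i0 : nat => ind (Z (S (S j)) ((u * R1 + i) * R2 + i0)%nat)) with
          (fun k => ind (Z (S (S j)) ((u * R1 + i) * R2 + k)%nat)) in G by reflexivity.
        fold (X i) in G. pose proof (ind_01 (Z (S j) (u * R1 + i)%nat)).
        assert (2 / INR R2 * X i > 1).
        { apply Rmult_lt_reg_r with (INR R2 / 2). lra. field_simplify; lra. }
        lra. }
  eapply Rle_trans; [|apply sm_le; intros i _; apply Hpt].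
  rewrite !sm_minus. rewrite sm_const, Rmult_1_r. rewrite sm_scal.
  assert (HS : sm X R1 <= INR (R1 * R2) / 8).
  { unfold X. rewrite (sm_ext _ (fun p => sm (fun k => ind (Z (S (S j)) (u * (R1 * R2) + (p * R2 + k))%nat)) R2)).
    rewrite <- (sm_split (fun k => ind (Z (S (S j)) (u * (R1 * R2) + k)%nat)) R1 R2).
    apply HZ; auto. intros p _. apply sm_ext; intros k _. f_equal. f_equal. ring. }
  rewrite mult_INR in HS.
  assert (sm (fun i => ind (Z (S j) (u * R1 + i)%nat)) R1 <= INR R1 / 2) by exact Hg.
  assert (2 / INR R2 * sm X R1 <= INR R1 / 4).
  { apply Rle_trans with (2 / INR R2 * (INR R1 * INR R2 / 8)). apply Rmult_le_compat_l.
    apply Rlt_le, Rdiv_lt_0_compat; lra. auto. right; field; lra. }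
  lra.
Qed.

Definition gc j p := sm (fun i => ind (good (S j) (p * Rb (S j) + i)%nat)) (Rb (S j)).

Fixpoint mu j a : R := match j with
  | 0 => ind (a = 0%nat)
  | S j' => ind (T (S j') a) * mu j' (a / Rb (S j'))%nat / gc j' (a / Rb (S j'))%nat end.

Lemma gc_pos j p : T j p -> INR (Rb (S j)) / 4 <= gc j p.
Proof. intros H. apply good_children. apply T_lt; auto. apply T_good; auto. Qed.

Lemma INR_Rb j : 4 <= INR (Rb (S j)).
Proof. replace 4 with (INR 4) by (simpl; lra); apply le_INR; apply HR. Qed.

Lemma mu_nonneg j a : 0 <= mu j a.
Proof. revert a; induction j; intros a; simpl. apply ind_01.
  destruct (classic (T (S j) a)) as [H|H].
  - simpl in H. rewrite ind_T by (simpl; auto). pose proof (gc_pos j _ (proj1 H)). pose proof (INR_Rb j).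
    specialize (IHj (a / Rb (S j))%nat). apply Rmult_le_pos. lra. apply Rlt_le, Rinv_0_lt_compat; lra.
  - rewrite ind_F by auto. lra. Qed.

Lemma mu_zero j a : ~ T j a -> mu j a = 0.
Proof. destruct j; simpl; intros H. apply ind_F; auto. rewrite ind_F by auto. lra. Qed.

Lemma Qn_INR_pos j : 0 < INR (Qn j).
Proof. apply lt_0_INR. apply Qn_pos. Qed.

Lemma mu_bound j a : mu j a <= 4 ^ j / INR (Qn j).
Proof. revert a; induction j; intros a; simpl.
  - pose proof (ind_01 (a = 0%nat)). lra.
  - destruct (classic (T (S j) a)) as [H|H].
    + rewrite ind_T by auto. simpl in H. pose proof (gc_pos j _ (proj1 H)). pose proof (INR_Rb j).
      specialize (IHj (a / Rb (S j))%nat). pose proof (mu_nonneg j (a / Rb (S j))%nat).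
      pose proof (Qn_INR_pos j). rewrite mult_INR.
      apply Rle_trans with ((4 ^ j / INR (Qn j)) / (INR (Rb (S j)) / 4)).
      * rewrite Rmult_1_l. unfold Rdiv. apply Rmult_le_compat; auto.
        apply Rlt_le, Rinv_0_lt_compat; lra. apply Rinv_le_contravar; lra.
      * right. field. lra.
    + rewrite ind_F by auto. pose proof (Qn_INR_pos (S j)). simpl in H0.
      replace (0 * mu j (a / Rb (S j))%nat / gc j (a / Rb (S j))%nat) with 0 by (unfold Rdiv; ring).
      apply Rmult_le_pos. pose proof (pow_le 4 j). lra. apply Rlt_le, Rinv_0_lt_compat. lra. Qed.

Lemma div_idx p i n : (i < n)%nat -> ((p * n + i) / n = p)%nat.
Proof. intros. rewrite Nat.div_add_l by lia. rewrite Nat.div_small by lia. lia. Qed.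

Lemma mu_children j p : sm (fun i => mu (S j) (p * Rb (S j) + i)%nat) (Rb (S j)) = mu j p.
Proof.
  rewrite (sm_ext _ (fun i => ind (T (S j) (p * Rb (S j) + i)%nat) * mu j p / gc j p)).
  2:{ intros i Hi. simpl. rewrite div_idx by auto. reflexivity. }
  destruct (classic (T j p)) as [H|H].
  - rewrite (sm_ext _ (fun i => mu j p / gc j p * ind (good (S j) (p * Rb (S j) + i)%nat))).
    + rewrite sm_scal. fold (gc j p). pose proof (gc_pos j p H). pose proof (INR_Rb j). field. lra.
    + intros i Hi. unfold ind. destruct (excluded_middle_informative (T (S j) (p * Rb (S j) + i)%nat)) as [A|A];
      destruct (excluded_middle_informative (good (S j) (p * Rb (S j) + i)%nat)) as [B|B]; simpl in A.
      * field. pose proof (gc_pos j p H); pose proof (INR_Rb j); lra.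
      * tauto.
      * rewrite div_idx in A by auto. tauto.
      * lra.
  - rewrite mu_zero by auto. rewrite (sm_ext _ (fun _ => 0)). rewrite sm_const; lra.
    intros i Hi. rewrite ind_F. lra. simpl. rewrite div_idx by auto. tauto. Qed.

Fixpoint Dd j L : nat := match L with 0 => 1%nat | S L => (Dd j L * Rb (S (j + L)))%nat end.

Lemma Qn_Dd j L : Qn (j + L) = (Qn j * Dd j L)%nat.
Proof. induction L; simpl. rewrite Nat.add_0_r; lia. rewrite Nat.add_succ_r. simpl. rewrite IHL. ring. Qed.

Lemma mu_desc j L u : sm (fun i => mu (j + L) (u * Dd j L + i)%nat) (Dd j L) = mu j u.
Proof.
  induction L.
  - simpl. rewrite Nat.add_0_r. rewrite Nat.mul_1_r, Nat.add_0_r. lra.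
  - simpl Dd. rewrite sm_split. rewrite <- IHL. apply sm_ext; intros p Hp.
    rewrite Nat.add_succ_r. rewrite <- mu_children. apply sm_ext; intros i Hi. f_equal. ring.
Qed.

Lemma mass_total L : sm (mu L) (Qn L) = 1.
Proof. pose proof (mu_desc 0 L 0). simpl in H. pose proof (Qn_Dd 0 L). simpl in H0. rewrite H0. rewrite Nat.add_0_r.
  rewrite <- (ind_T (0 = 0)%nat) by auto. rewrite <- H. apply sm_ext; intros. f_equal. Qed.


Variable L0 : R.
Hypothesis HL0 : 0 < L0.

Definition len j := L0 / INR (Qn j).
Definition cell j a x := INR a * len j <= x <= (INR a + 1) * len j.
Definition Kset L x := exists a, T L a /\ cell L a x.

Lemma len_pos j : 0 < len j.
Proof. unfold len. apply Rdiv_lt_0_compat; auto. apply Qn_INR_pos. Qed.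

Lemma Dd_pos j L : (0 < Dd j L)%nat.
Proof. induction L; simpl. lia. pose proof (Rb_pos (j + L)). nia. Qed.

Lemma cell_sub j L u i x : (i < Dd j L)%nat -> cell (j + L) (u * Dd j L + i)%nat x -> cell j u x.
Proof.
  intros Hi. unfold cell, len. rewrite Qn_Dd, !mult_INR, plus_INR, mult_INR.
  assert (HD : 0 < INR (Dd j L)) by (apply lt_0_INR, Dd_pos).
  assert (HQ := Qn_INR_pos j).
  assert (Hi' : INR i + 1 <= INR (Dd j L)) by (rewrite <- S_INR; apply le_INR; lia).
  pose proof (pos_INR i). pose proof (pos_INR u).
  intros [H1 H2]. split.
  - eapply Rle_trans; [|apply H1]. replace ((INR u * INR (Dd j L) + INR i) * (L0 / (INR (Qn j) * INR (Dd j L))))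
      with (INR u * (L0 / INR (Qn j)) + INR i * (L0 / (INR (Qn j) * INR (Dd j L)))) by (field; lra).
    assert (0 <= INR i * (L0 / (INR (Qn j) * INR (Dd j L)))).
    { apply Rmult_le_pos; auto. left. apply Rdiv_lt_0_compat; auto. nra. } lra.
  - eapply Rle_trans; [apply H2|].
    replace ((INR u * INR (Dd j L) + INR i + 1) * (L0 / (INR (Qn j) * INR (Dd j L))))
      with (INR u * (L0 / INR (Qn j)) + (INR i + 1) / INR (Dd j L) * (L0 / INR (Qn j))) by (field; lra).
    replace ((INR u + 1) * (L0 / INR (Qn j))) with (INR u * (L0 / INR (Qn j)) + 1 * (L0 / INR (Qn j))) by ring.
    apply Rplus_le_compat_l. apply Rmult_le_compat_r. left; apply Rdiv_lt_0_compat; auto.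
    apply Rmult_le_reg_r with (INR (Dd j L)); auto. unfold Rdiv. rewrite Rmult_assoc, Rinv_l by lra. lra.
Qed.

Lemma Kset_step L x : Kset (S L) x -> Kset L x.
Proof.
  intros [a [[HT _] Hc]]. exists (a / Rb (S L))%nat. split; auto.
  apply (cell_sub L 1 _ (a mod Rb (S L))%nat).
  - simpl Dd. rewrite !Nat.add_0_r. apply Nat.mod_upper_bound. pose proof (Rb_pos L). lia.
  - simpl Dd. rewrite !Nat.add_0_r. rewrite Nat.mul_comm, <- Nat.div_mod_eq. rewrite Nat.add_1_r. auto.
Qed.

Lemma Kset_mono L L' x : (L <= L')%nat -> Kset L' x -> Kset L x.
Proof. intros H. induction H; auto. intros. apply IHle, Kset_step; auto. Qed.

Lemma Kset_bound L x : Kset L x -> 0 <= x <= L0.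
Proof. intros H. apply (Kset_mono 0 L) in H; [|lia]. destruct H as [a [Ha Hc]]. simpl in Ha. subst.
  unfold cell, len in Hc. simpl in Hc. lra. Qed.

Lemma closed_fin (P : nat -> Prop) (lo hi : nat -> R) N x :
  ~ (exists a, (a < N)%nat /\ P a /\ lo a <= x <= hi a) ->
  exists e, 0 < e /\ forall y, Rabs (y - x) < e -> ~ (exists a, (a < N)%nat /\ P a /\ lo a <= y <= hi a).
Proof.
  induction N; intros H.
  - exists 1. split. lra. intros y _ [a [Ha _]]. lia.
  - destruct IHN as [e1 [He1 H1]].
    { intros [a [Ha Hb]]. apply H. exists a. split; auto. }
    destruct (classic (P N)) as [HP|HP].
    + assert (Hx : x < lo N \/ hi N < x).
      { destruct (Rlt_dec x (lo N)); auto. destruct (Rlt_dec (hi N) x); auto. exfalso; apply H.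
        exists N. split; auto. split; auto. lra. }
      set (e2 := Rmax (lo N - x) (x - hi N)).
      assert (He2 : 0 < e2) by (unfold e2, Rmax; destruct (Rle_dec (lo N - x) (x - hi N)); lra).
      exists (Rmin e1 e2). split. unfold Rmin; destruct (Rle_dec e1 e2); lra.
      intros y Hy [a [Ha [Pa Ca]]].
      assert (Y1 : Rabs (y - x) < e1) by (eapply Rlt_le_trans; [apply Hy| apply Rmin_l]).
      assert (Y2 : Rabs (y - x) < e2) by (eapply Rlt_le_trans; [apply Hy| apply Rmin_r]).
      destruct (Nat.eq_dec a N).
      * subst. apply Rabs_def2 in Y2. revert Y2. unfold e2, Rmax. destruct (Rle_dec (lo N - x) (x - hi N)); intros; lra.
      * apply (H1 y Y1). exists a. split; auto. lia.
    + exists e1. split; auto. intros y Hy [a [Ha [Pa Ca]]].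
      destruct (Nat.eq_dec a N). subst; tauto.
      apply (H1 y Hy). exists a. split; auto. lia.
Qed.

Lemma Kset_compl_open L x : ~ Kset L x -> exists e, 0 < e /\ forall y, Rabs (y - x) < e -> ~ Kset L y.
Proof.
  intros H. destruct (closed_fin (T L) (fun a => INR a * len L) (fun a => (INR a + 1) * len L) (Qn L) x) as [e [He He']].
  { intros [a [_ [Pa Ca]]]. apply H. exists a. split; auto. }
  exists e. split; auto. intros y Hy [a [Ta Ca]]. apply (He' y Hy). exists a. split; auto. apply T_lt; auto.
Qed.

Section Meets.
Variable W : R -> Prop.
Definition meets j a := exists x, cell j a x /\ W x.

Lemma group_le j L : sm (fun a => ind (meets (j + L) a) * mu (j + L) a) (Qn (j + L))
  <= sm (fun u => ind (meets j u) * mu j u) (Qn j).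
Proof.
  rewrite Qn_Dd, sm_split. apply sm_le; intros u Hu.
  rewrite <- (mu_desc j L u). rewrite <- sm_scal. apply sm_le; intros i Hi.
  apply Rmult_le_compat_r. apply mu_nonneg. apply ind_imp. intros [x [Cx Wx]]. exists x. split; auto.
  eapply cell_sub; eauto.
Qed.

Lemma count_meets j c rho : 0 < rho -> (forall x, W x -> Rabs (x - c) < rho) ->
  sm (fun u => ind (meets j u)) (Qn j) <= 2 * rho / len j + 2.
Proof.
  intros Hr HW. pose proof (len_pos j).
  eapply Rle_trans. apply sm_le with (g := fun u => ind ((c - rho) / len j - 1 <= INR u <= (c + rho) / len j)).
  - intros u _. apply ind_imp. intros [x [[C1 C2] Wx]]. specialize (HW x Wx). apply Rabs_def2 in HW.
    split.
    + apply Rmult_le_reg_r with (len j); auto. unfold Rdiv. rewrite Rmult_minus_distr_r, Rmult_assoc, Rinv_l by lra. lra.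
    + apply Rmult_le_reg_r with (len j); auto. unfold Rdiv. rewrite Rmult_assoc, Rinv_l by lra. lra.
  - eapply Rle_trans. apply count_int.
    + unfold Rdiv. assert (0 < rho * / len j) by (apply Rmult_lt_0_compat; auto; apply Rinv_0_lt_compat; auto).
      replace ((c - rho) * / len j) with (c * / len j - rho * / len j) by ring.
      replace ((c + rho) * / len j) with (c * / len j + rho * / len j) by ring. lra.
    + right. field. lra.
Qed.

Lemma mass_meets j : sm (fun u => ind (meets j u) * mu j u) (Qn j) <= 4 ^ j / INR (Qn j) * sm (fun u => ind (meets j u)) (Qn j).
Proof. rewrite <- sm_scal. apply sm_le; intros. rewrite Rmult_comm. apply Rmult_le_compat_r. apply ind_01. apply mu_bound. Qed.
End Meets.


Lemma list_bound (g : nat -> R) (Hg : forall a b, g a = g b -> a = b) (l : list R) :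
  exists N, forall n, In (g n) l -> (n <= N)%nat.
Proof.
  induction l as [|y l [N HN]].
  - exists 0%nat. intros n [].
  - destruct (classic (exists m, g m = y)) as [[m Hm]|Hm].
    + exists (Nat.max N m). intros n [H|H].
      * subst. apply Hg in H. subst. lia.
      * apply HN in H. lia.
    + exists N. intros n [H|H]. exfalso; apply Hm; eauto. auto.
Qed.

Lemma compact_step (V : nat -> R -> Prop) : (forall n, open_set (V n)) ->
  (forall x, (forall L, Kset L x) -> exists n, V n x) ->
  exists N L1, forall L x, (L1 <= L)%nat -> Kset L x -> exists n, (n <= N)%nat /\ V n x.
Proof.
  intros Hop Hcov.
  set (F := mkfamily (fun _ => True)
        (fun y x => (exists n, y = INR n /\ V n x) \/ (exists L, y = - INR L - 1 /\ ~ Kset L x))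
        (fun _ _ => I)).
  assert (HF : covering_open_set (fun c => 0 <= c <= L0) F).
  { split.
    - intros x Hx. destruct (classic (forall L, Kset L x)) as [H|H].
      + destruct (Hcov x H) as [n Hn]. exists (INR n). simpl. left. eauto.
      + apply not_all_ex_not in H. destruct H as [L HL]. exists (- INR L - 1). simpl. right. eauto.
    - intros y x Hx. simpl in Hx. destruct Hx as [[n [Hy Hn]]|[L [Hy HL]]].
      + destruct (Hop n x Hn) as [d Hd]. exists d. intros z Hz. simpl. left. exists n. split; auto.
      + destruct (Kset_compl_open L x HL) as [e [He He']]. exists (mkposreal e He). intros z Hz.
        simpl. right. exists L. split; [auto|]. apply He'. exact Hz. }
  destruct (compact_P3 0 L0 F HF) as [D [Hc [l Hl]]].
  destruct (list_bound INR INR_eq l) as [N HN].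
  destruct (list_bound (fun L => - INR L - 1) ltac:(intros a b Hab; apply INR_eq; lra) l) as [L1 HL1].
  exists N, L1. intros L x HL Hx.
  destruct (Hc x (Kset_bound L x Hx)) as [y [Fy Dy]].
  assert (Iy : In y l) by (apply Hl; split; simpl; auto).
  simpl in Fy. destruct Fy as [[n [Hy Hn]]|[L' [Hy HL']]].
  - exists n. split; auto. subst. apply HN; auto.
  - subst. apply HL1 in Iy. exfalso. apply HL'. apply (Kset_mono L' L); auto. lia.
Qed.


Lemma pow4_ge j : INR j <= 4 ^ j.
Proof. induction j. simpl; lra. rewrite S_INR. simpl. pose proof (pow_le 4 j ltac:(lra)).
  assert (1 <= 4 ^ j) by (apply pow_R1_Rle; lra). lra. Qed.

Lemma Qn_ge j : 4 ^ j <= INR (Qn j).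
Proof. induction j. simpl; lra. simpl. rewrite mult_INR. pose proof (INR_Rb j). pose proof (pow_le 4 j ltac:(lra)). nra. Qed.

Lemma Qn_mono i j : (i <= j)%nat -> INR (Qn i) <= INR (Qn j).
Proof. induction 1. lra. simpl. rewrite mult_INR. pose proof (INR_Rb m). pose proof (Qn_INR_pos m). nra. Qed.

Lemma len_anti i j : (i <= j)%nat -> len j <= len i.
Proof. intros H. unfold len. apply Rmult_le_compat_l. lra. apply Rinv_le_contravar. apply Qn_INR_pos. apply Qn_mono; auto. Qed.

Lemma least_ex (P : nat -> Prop) : (exists k, P k) -> exists j, P j /\ forall i, (i < j)%nat -> ~ P i.
Proof.
  intros [k Hk]. revert Hk. induction k as [k IH] using (well_founded_induction Wf_nat.lt_wf). intros Hk.
  destruct (classic (exists i, (i < k)%nat /\ P i)) as [[i [Hi Pi]]|H].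
  - apply (IH i Hi Pi).
  - exists k. split; auto. intros i Hi Pi. apply H. eauto.
Qed.

Lemma sm_sum_f g N : sm g (S N) = sum_f_R0 g N.
Proof. induction N. simpl; lra. simpl sm. simpl sum_f_R0. rewrite <- IHN. simpl. lra. Qed.

Theorem Kinf_not_null (s : R) (J0 : nat) : 0 < s < 1 ->
  (forall j, (J0 < j)%nat -> 4 ^ j * Rpower (len (j - 1)) (1 - s) <= 1) ->
  ~ hausdorff_null s (fun x => forall L, Kset L x).
Proof.
  intros Hs HJ Hnull.
  assert (HlJ := len_pos J0).
  destruct (Hnull (len J0 / 8) (L0 / 12)) as [U [r [Hr [Hcov Hsum]]]]; try lra.
  set (V := fun n y => exists x, U n x /\ Rabs (y - x) < r n).
  assert (HA : forall n, exists Jn, forall L, (Jn <= L)%nat ->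
     sm (fun a => ind (meets (V n) L a) * mu L a) (Qn L) <= 12 / L0 * Rpower (r n) s).
  { intros n. destruct (Hr n) as [[rpos rle] Hdiam].
    assert (Hrs : 0 < Rpower (r n) s) by (unfold Rpower; apply exp_pos).
    destruct (classic (exists x, U n x)) as [[x0 Hx0]|Hno].
    - destruct (least_ex (fun j => len j <= 4 * r n)) as [j [Hj Hmin]].
      { destruct (INR_unbounded (L0 / (4 * r n))) as [k Hk]. exists k. unfold len.
        pose proof (pow4_ge k). pose proof (Qn_ge k). pose proof (Qn_INR_pos k).
        assert (L0 / (4 * r n) < INR (Qn k)) by lra.
        assert (Hq : L0 < 4 * r n * INR (Qn k)).
        { replace L0 with (L0 / (4 * r n) * (4 * r n)) by (field; lra). nra. }
        unfold Rdiv. apply Rmult_le_reg_r with (INR (Qn k)); auto. rewrite Rmult_assoc, Rinv_l by lra. lra. }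
      assert (HjJ : (J0 < j)%nat).
      { destruct (Nat.lt_ge_cases J0 j) as [H|H]; auto. exfalso. pose proof (len_anti _ _ H). lra. }
      assert (Hj1 : 4 * r n < len (j - 1)).
      { apply Rnot_le_lt. apply Hmin. lia. }
      exists j. intros L HL. replace L with (j + (L - j))%nat by lia.
      eapply Rle_trans. apply group_le.
      eapply Rle_trans. apply mass_meets.
      assert (Hcnt : sm (fun u => ind (meets (V n) j u)) (Qn j) <= 2 * (2 * r n) / len j + 2).
      { apply (count_meets (V n) j x0). lra. intros y [x [Ux Hyx]].
        pose proof (Hdiam x x0 Ux Hx0). pose proof (Rabs_triang (y - x) (x - x0)).
        replace (y - x + (x - x0)) with (y - x0) in H0 by ring. lra. }
      pose proof (Qn_INR_pos j). pose proof (pow_le 4 j ltac:(lra)).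
      eapply Rle_trans. apply Rmult_le_compat_l. apply Rmult_le_pos; auto. left; apply Rinv_0_lt_compat; auto. apply Hcnt.
      assert (HQ : 1 / INR (Qn j) <= 4 * r n / L0).
      { unfold len in Hj. apply Rmult_le_reg_r with (L0 * INR (Qn j)). nra.
        replace (1 / INR (Qn j) * (L0 * INR (Qn j))) with L0 by (field; lra).
        replace (4 * r n / L0 * (L0 * INR (Qn j))) with (4 * r n * INR (Qn j)) by (field; lra).
        apply Rmult_le_reg_r with (/ INR (Qn j)). apply Rinv_0_lt_compat; auto.
        rewrite Rmult_assoc, Rinv_r by lra. lra. }
      apply Rle_trans with (12 / L0 * (4 ^ j * r n)).
      + unfold len. replace (4 ^ j / INR (Qn j) * (2 * (2 * r n) / (L0 / INR (Qn j)) + 2))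
          with (4 ^ j * (4 * r n / L0) + 4 ^ j * 2 * (1 / INR (Qn j))) by (field; lra).
        apply Rle_trans with (4 ^ j * (4 * r n / L0) + 4 ^ j * 2 * (4 * r n / L0)).
        apply Rplus_le_compat_l. apply Rmult_le_compat_l. lra. auto.
        right; field; lra.
      + apply Rmult_le_compat_l. left; apply Rdiv_lt_0_compat; lra.
        rewrite <- (Rpower_1 (r n)) at 1 by lra.
        replace 1 with (s + (1 - s)) at 1 by ring. rewrite Rpower_plus.
        specialize (HJ j HjJ).
        assert (Rpower (r n) (1 - s) <= Rpower (len (j - 1)) (1 - s)).
        { apply Rle_Rpower_l. lra. split; lra. }
        assert (0 <= Rpower (r n) (1 - s)) by (unfold Rpower; left; apply exp_pos).
        apply Rle_trans with (Rpower (r n) s * (4 ^ j * Rpower (len (j - 1)) (1 - s))).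
        * replace (4 ^ j * (Rpower (r n) s * Rpower (r n) (1 - s))) with (Rpower (r n) s * (4 ^ j * Rpower (r n) (1 - s))) by ring.
          apply Rmult_le_compat_l. lra. apply Rmult_le_compat_l; lra.
        * rewrite <- (Rmult_1_r (Rpower (r n) s)) at 2. apply Rmult_le_compat_l; lra.
    - exists 0%nat. intros L _. rewrite (sm_ext _ (fun _ => 0)). rewrite sm_const.
      assert (0 < 12 / L0) by (apply Rdiv_lt_0_compat; lra). nra.
      intros a _. rewrite ind_F. lra. intros [y [_ [x [Ux _]]]]. apply Hno; eauto. }
  assert (HB : forall N, exists J, forall n L, (n <= N)%nat -> (J <= L)%nat ->
     sm (fun a => ind (meets (V n) L a) * mu L a) (Qn L) <= 12 / L0 * Rpower (r n) s).
  { induction N.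
    - destruct (HA 0%nat) as [J HJ0]. exists J. intros n L Hn HL. replace n with 0%nat by lia. auto.
    - destruct IHN as [J1 H1]. destruct (HA (S N)) as [J2 H2]. exists (Nat.max J1 J2).
      intros n L Hn HL. destruct (Nat.eq_dec n (S N)). subst; apply H2; lia. apply H1; lia. }
  assert (Hop : forall n, open_set (V n)).
  { intros n y [x [Ux Hyx]]. assert (Hd : 0 < r n - Rabs (y - x)) by lra.
    exists (mkposreal _ Hd). intros z Hz. unfold disc in Hz; simpl in Hz. exists x. split; auto.
    pose proof (Rabs_triang (z - y) (y - x)). replace (z - y + (y - x)) with (z - x) in H by ring. lra. }
  assert (Hcv : forall x, (forall L, Kset L x) -> exists n, V n x).
  { intros x Hx. destruct (Hcov x Hx) as [n Hn]. exists n, x. split; auto. rewrite Rminus_diag, Rabs_R0.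
    apply Hr. }
  destruct (compact_step V Hop Hcv) as [N [L1 HC]].
  destruct (HB N) as [J HJB].
  set (L := Nat.max J L1).
  assert (H1 : 1 <= sm (fun n => sm (fun a => ind (meets (V n) L a) * mu L a) (Qn L)) (S N)).
  { rewrite <- (mass_total L). rewrite sm_swap. apply sm_le; intros a Ha.
    destruct (classic (T L a)) as [HT|HT].
    - assert (Hx : Kset L (INR a * len L)).
      { exists a. split; auto. unfold cell. pose proof (len_pos L). lra. }
      destruct (HC L _ ltac:(unfold L; lia) Hx) as [n [Hn Vn]].
      eapply Rle_trans; [|apply (sm_single _ _ n)].
      + cbv beta. rewrite ind_T. lra. exists (INR a * len L). split; auto. unfold cell. pose proof (len_pos L). lra.
      + intros; apply Rmult_le_pos. apply ind_01. apply mu_nonneg.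
      + lia.
    - rewrite mu_zero by auto. apply sm_nonneg. intros. lra. }
  assert (H2 : sm (fun n => sm (fun a => ind (meets (V n) L a) * mu L a) (Qn L)) (S N)
               <= 12 / L0 * sum_f_R0 (fun n => Rpower (r n) s) N).
  { rewrite <- sm_sum_f, <- sm_scal. apply sm_le; intros n Hn. apply HJB; unfold L; lia. }
  specialize (Hsum N).
  assert (12 / L0 * sum_f_R0 (fun n => Rpower (r n) s) N < 12 / L0 * (L0 / 12)).
  { apply Rmult_lt_compat_l. apply Rdiv_lt_0_compat; lra. auto. }
  replace (12 / L0 * (L0 / 12)) with 1 in H by (field; lra). lra.
Qed.

End Tree.

Lemma key_ineq (x s : R) : 1 <= x -> 1 < s ->
  / Rpower (x + 1) s <= (Rpower x (1 - s) - Rpower (x + 1) (1 - s)) / (s - 1).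
Proof.
  intros Hx Hs. unfold Rpower.
  set (a := ln x). set (b := ln (x + 1)).
  assert (Hba : 1 / (x + 1) <= b - a).
  { unfold a, b. pose proof (ln_diff (x + 1) x ltac:(lra) ltac:(lra)).
    replace ((x + 1 - x) / (x + 1)) with (1 / (x + 1)) in H by (field; lra). lra. }
  assert (E1 : exp ((1 - s) * a) = exp ((1 - s) * b) * exp ((s - 1) * (b - a))).
  { rewrite <- exp_plus. f_equal. ring. }
  assert (E2 : 1 + (s - 1) * (b - a) <= exp ((s - 1) * (b - a))) by apply exp_ineq1_le.
  assert (E3 : exp (- (s * b)) = exp ((1 - s) * b) * / (x + 1)).
  { replace (- (s * b)) with ((1 - s) * b + - b) by ring. rewrite exp_plus. f_equal.
    unfold b. rewrite exp_Ropp, exp_ln by lra. auto. }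
  rewrite <- exp_Ropp. replace (- (s * ln (x + 1))) with (- (s * b)) by auto. rewrite E3. fold a b. rewrite E1.
  pose proof (exp_pos ((1 - s) * b)).
  apply Rmult_le_reg_r with (s - 1). lra.
  replace ((exp ((1 - s) * b) * exp ((s - 1) * (b - a)) - exp ((1 - s) * b)) / (s - 1) * (s - 1))
    with (exp ((1 - s) * b) * (exp ((s - 1) * (b - a)) - 1)) by (field; lra).
  rewrite Rmult_assoc. apply Rmult_le_compat_l. lra.
  assert ((s - 1) * (1 / (x + 1)) <= (s - 1) * (b - a)) by (apply Rmult_le_compat_l; lra).
  replace (/ (x + 1) * (s - 1)) with ((s - 1) * (1 / (x + 1))) by (field; lra). lra.
Qed.

Lemma Rpower_1b y : Rpower 1 y = 1.
Proof. unfold Rpower. rewrite ln_1, Rmult_0_r, exp_0. auto. Qed.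

Lemma zeta_bound (s : R) (K : nat) : 1 < s ->
  sm (fun k => / Rpower (INR k + 1) s) (S K) <= 1 + (1 - Rpower (INR K + 1) (1 - s)) / (s - 1).
Proof.
  intros Hs. induction K.
  - simpl sm. simpl INR. rewrite !Rplus_0_l, !Rpower_1b. replace ((1 - 1) / (s - 1)) with 0 by (field; lra). lra.
  - change (sm (fun k => / Rpower (INR k + 1) s) (S (S K))) with
      (sm (fun k => / Rpower (INR k + 1) s) (S K) + / Rpower (INR (S K) + 1) s).
    pose proof (key_ineq (INR (S K)) s ltac:(rewrite S_INR; pose proof (pos_INR K); lra) Hs).
    rewrite S_INR in *. unfold Rdiv in *. lra.
Qed.

Lemma zeta_bound' (s : R) (K : nat) : 1 < s ->
  sm (fun k => / Rpower (INR k + 1) s) K <= s / (s - 1).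
Proof.
  intros Hs. destruct K. simpl. apply Rlt_le, Rdiv_lt_0_compat; lra.
  eapply Rle_trans. apply zeta_bound; auto.
  assert (0 < Rpower (INR K + 1) (1 - s)) by (unfold Rpower; apply exp_pos).
  replace (s / (s - 1)) with (1 + 1 / (s - 1)) by (field; lra). unfold Rdiv.
  assert (0 < / (s - 1)) by (apply Rinv_0_lt_compat; lra). nra.
Qed.

Lemma harmonic_ln (k : nat) : ln (INR k + 1) <= sm (fun i => 1 / (INR i + 1)) k.
Proof.
  induction k. simpl. rewrite Rplus_0_l, ln_1. lra.
  simpl sm. rewrite S_INR.
  assert (ln (INR k + 1 + 1) - ln (INR k + 1) <= 1 / (INR k + 1)).
  { pose proof (pos_INR k). pose proof (ln_le_lin ((INR k + 1 + 1) / (INR k + 1)) ltac:(apply Rdiv_lt_0_compat; lra)).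
    unfold Rdiv in H0. rewrite ln_mult, ln_Rinv in H0 by (try apply Rinv_0_lt_compat; lra).
    replace ((INR k + 1 + 1) * / (INR k + 1) - 1) with (1 / (INR k + 1)) in H0 by (field; lra). lra. }
  lra.
Qed.

Theorem null_big (s : R) (E : R -> Prop) : 1 < s -> hausdorff_null s E.
Proof.
  intros Hs delta eps Hd He.
  set (c := Rmin (Rmin delta 1) (eps * (s - 1) / (4 * s))).
  assert (Hc0 : 0 < c).
  { unfold c, Rmin. assert (0 < eps * (s - 1) / (4 * s)) by (apply Rdiv_lt_0_compat; nra).
    destruct (Rle_dec delta 1), (Rle_dec _ _); lra. }
  assert (Hcd : c <= delta) by (unfold c; eapply Rle_trans; [apply Rmin_l|apply Rmin_l]).
  assert (Hc1 : c <= 1) by (unfold c; eapply Rle_trans; [apply Rmin_l|apply Rmin_r]).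
  assert (Hce : c <= eps * (s - 1) / (4 * s)) by (unfold c; apply Rmin_r).
  set (P := fun k => c * sm (fun i => 1 / (INR i + 1)) k).
  assert (HPs : forall k, P (S k) = P k + c / (INR k + 1)).
  { intros k. unfold P. simpl sm. unfold Rdiv. ring. }
  assert (HP0 : P 0%nat = 0) by (unfold P; simpl; ring).
  assert (HPm : forall k, P k <= P (S k)).
  { intros. rewrite HPs. pose proof (pos_INR k). assert (0 < c / (INR k + 1)) by (apply Rdiv_lt_0_compat; lra). lra. }
  exists (fun n x => (exists k, n = (2 * k)%nat /\ P k <= x <= P (S k)) \/
                     (exists k, n = S (2 * k) /\ - P (S k) <= x <= - P k)).
  exists (fun n => c / (INR (Nat.div2 n) + 1)).
  split; [|split].
  - intros n. pose proof (pos_INR (Nat.div2 n)). split. split.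
    apply Rdiv_lt_0_compat; lra.
    apply Rle_trans with c; auto. unfold Rdiv. rewrite <- (Rmult_1_r c) at 2. apply Rmult_le_compat_l. lra.
    rewrite <- Rinv_1. apply Rinv_le_contravar; lra.
    intros x y [[k [Hk Hx]]|[k [Hk Hx]]] [[k' [Hk' Hy]]|[k' [Hk' Hy]]]; subst; try lia.
    + assert (k = k') by lia. subst. rewrite Nat.div2_double. rewrite HPs in *. apply Rabs_le; lra.
    + assert (k = k') by lia. subst. rewrite Nat.div2_succ_double. rewrite HPs in *. apply Rabs_le; lra.
  - intros x _.
    destruct (least_ex (fun k => Rabs x < P (S k))) as [k [Hk Hmin]].
    { destruct (INR_unbounded (exp (Rabs x / c))) as [m Hm]. exists m.
      pose proof (harmonic_ln (S m)). rewrite S_INR in H.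
      assert (Rabs x / c < ln (INR m + 1)).
      { rewrite <- (ln_exp (Rabs x / c)). apply ln_increasing. apply exp_pos. lra. }
      unfold P. apply Rmult_lt_reg_r with (/ c). apply Rinv_0_lt_compat; lra.
      rewrite (Rmult_comm c), Rmult_assoc, Rinv_r by lra. unfold Rdiv in H0.
      assert (ln (INR m + 1) <= ln (INR m + 1 + 1)) by (apply ln_le'; pose proof (pos_INR m); lra). lra. }
    assert (HPk : P k <= Rabs x).
    { destruct k. rewrite HP0. apply Rabs_pos. apply Rnot_lt_le. apply Hmin. lia. }
    destruct (Rle_dec 0 x).
    + exists (2 * k)%nat. left. exists k. split; auto. rewrite Rabs_right in * by lra. lra.
    + exists (S (2 * k)). right. exists k. split; auto. rewrite Rabs_left in * by lra. lra.
  - intros N.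
    assert (Hcs : Rpower c s <= c).
    { assert (Rpower c (s - 1) <= 1) by (apply Rle_trans with (Rpower 1 (s - 1)); [apply Rle_Rpower_l; lra| rewrite Rpower_1b; lra]).
      replace s with (1 + (s - 1)) at 1 by ring. rewrite Rpower_plus, Rpower_1 by lra. nra. }
    assert (Hg : forall k, Rpower (c / (INR k + 1)) s <= c * / Rpower (INR k + 1) s).
    { intros k. pose proof (pos_INR k). unfold Rdiv.
      rewrite <- Rpower_mult_distr by (try apply Rinv_0_lt_compat; lra).
      assert (Rpower (/ (INR k + 1)) s = / Rpower (INR k + 1) s).
      { unfold Rpower. rewrite ln_Rinv by lra. rewrite <- exp_Ropp. f_equal. ring. }
      rewrite H0. apply Rmult_le_compat_r; auto. left. apply Rinv_0_lt_compat. unfold Rpower; apply exp_pos. }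
    set (f := fun n => Rpower (c / (INR (Nat.div2 n) + 1)) s).
    assert (Hf : forall n, 0 <= f n) by (intros; unfold f, Rpower; left; apply exp_pos).
    change (sum_f_R0 (fun n => Rpower (c / (INR (Nat.div2 n) + 1)) s) N) with (sum_f_R0 f N).
    rewrite <- sm_sum_f.
    assert (H1 : sm f (S N) <= sm f (S N * 2)).
    { replace (S N * 2)%nat with (S N + S N)%nat by lia. rewrite sm_add.
      assert (0 <= sm (fun i => f (S N + i)%nat) (S N)) by (apply sm_nonneg; intros; auto). lra. }
    assert (H2 : sm f (S N * 2) <= 2 * (c * (s / (s - 1)))).
    { rewrite sm_split. eapply Rle_trans.
      - apply sm_le with (g := fun p => 2 * (c * / Rpower (INR p + 1) s)). intros p _.
        simpl. unfold f. replace (p * 2 + 0)%nat with (2 * p)%nat by lia.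
        replace (p * 2 + 1)%nat with (S (2 * p))%nat by lia.
        rewrite Nat.div2_double, Nat.div2_succ_double. pose proof (Hg p). lra.
      - rewrite sm_scal, sm_scal. apply Rmult_le_compat_l. lra. apply Rmult_le_compat_l. lra.
        apply zeta_bound'; auto. }
    assert (2 * (c * (s / (s - 1))) <= eps / 2).
    { apply Rle_trans with (2 * (eps * (s - 1) / (4 * s) * (s / (s - 1)))).
      apply Rmult_le_compat_l. lra. apply Rmult_le_compat_r. apply Rlt_le, Rdiv_lt_0_compat; lra. auto.
      right. field. lra. }
    lra.
Qed.

Section Conc.
Variables (k0 beta A : nat).
Hypothesis Hk0 : (4 <= k0)%nat.
Hypothesis Hb : (2 <= beta)%nat.
Hypothesis HA6 : (6 <= A)%nat.

Definition Ee b : nat := (A * beta ^ b)%nat.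
Definition Nb b : nat := (2 ^ Ee b)%nat.
Definition Ff b : nat := (A * k0 * beta ^ S b)%nat.
Definition Rbk j : nat := match j with 0 => 1%nat | S j' => (2 ^ (Ff (S j') - Ff j'))%nat end.

Lemma bpow_pos b : (1 <= beta ^ b)%nat.
Proof. induction b; simpl. lia. nia. Qed.

Lemma Ff_step j : (Ff j + 2 <= Ff (S j))%nat.
Proof. unfold Ff. pose proof (bpow_pos (S j)). remember (beta ^ S j)%nat as X.
  replace (beta ^ S (S j))%nat with (beta * X)%nat by (subst; simpl; lia). nia. Qed.

Lemma Ff_mono i j : (i <= j)%nat -> (Ff i <= Ff j)%nat.
Proof. induction 1. lia. pose proof (Ff_step m). lia. Qed.

Lemma HRc j : (4 <= Rbk (S j))%nat.
Proof. simpl. pose proof (Ff_step j). replace 4%nat with (2 ^ 2)%nat by auto.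
  apply Nat.pow_le_mono_r; lia. Qed.

Lemma Qn_eq j : Qn Rbk j = (2 ^ (Ff j - Ff 0))%nat.
Proof. induction j. simpl. rewrite Nat.sub_diag. auto.
  simpl Qn. rewrite IHj. simpl Rbk. rewrite <- Nat.pow_add_r. f_equal.
  pose proof (Ff_mono 0 j ltac:(lia)). pose proof (Ff_step j). lia. Qed.

Lemma cond_iv j : (48 * Nb (S (S (S j))) <= Rbk (S j) * Rbk (S (S j)))%nat.
Proof.
  simpl Rbk. rewrite <- Nat.pow_add_r. unfold Nb.
  apply Nat.le_trans with (2 ^ 6 * 2 ^ Ee (S (S (S j))))%nat. apply Nat.mul_le_mono_r. simpl; lia.
  rewrite <- Nat.pow_add_r. apply Nat.pow_le_mono_r. lia.
  unfold Ee, Ff. pose proof (bpow_pos (S j)). remember (beta ^ S j)%nat as X.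
  replace (beta ^ S (S j))%nat with (beta * X)%nat by (subst; simpl; lia).
  replace (beta ^ S (S (S j)))%nat with (beta * (beta * X))%nat by (subst; simpl; lia).
  pose proof (Ff_step j). pose proof (Ff_step (S j)). unfold Ff in H0, H1.
  replace (beta ^ S (S j))%nat with (beta * X)%nat in * by (subst; simpl; lia).
  replace (beta ^ S (S (S j)))%nat with (beta * (beta * X))%nat in * by (subst; simpl; lia).
  rewrite <- HeqX in H0. nia.
Qed.

Variables (C1 C2 gamma : R) (t : nat -> R).
Hypothesis hC1 : 0 < C1.
Hypothesis hC2 : 0 < C2.
Hypothesis hgamma : 0 < gamma.
Hypothesis ht : forall n : nat, (1 <= n)%nat ->
          C1 * Rpower (INR n) gamma <= t n <= C2 * Rpower (INR n) gamma.
Hypothesis Hk0g : gamma + 3 <= INR k0.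
Hypothesis Hbg : INR k0 + 1 <= gamma * INR beta.
Definition Cc := 1 / (112 * ln (2 * INR beta)).
Hypothesis HA1 : C2 / Cc <= 2 ^ A.
Hypothesis HA2 : 1 <= C1 * 2 ^ A.

Definition L0c := / 2 ^ (Ff 0).

Lemma exp_le' x y : x <= y -> exp x <= exp y.
Proof. intros. destruct (Req_dec x y). subst; lra. left; apply exp_increasing; lra. Qed.

Lemma pow2_exp m : 2 ^ m = exp (INR m * ln 2).
Proof. rewrite <- Rpower_pow by lra. unfold Rpower. auto. Qed.

Lemma len_eq j : len Rbk L0c j = / 2 ^ Ff j.
Proof. unfold len, L0c. rewrite Qn_eq, pow_INR. replace (INR 2) with 2 by (simpl; lra).
  pose proof (Ff_mono 0 j ltac:(lia)).
  replace (Ff j) with (Ff j - Ff 0 + Ff 0)%nat at 2 by lia. rewrite pow_add.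
  assert (0 < 2 ^ (Ff j - Ff 0)) by (apply pow_lt; lra). assert (0 < 2 ^ Ff 0) by (apply pow_lt; lra).
  field. lra. Qed.

Lemma INR_pow2 m : INR (2 ^ m) = 2 ^ m.
Proof. rewrite pow_INR. replace (INR 2) with 2 by (simpl; lra). auto. Qed.

Lemma Nb_ge b : (3 <= Nb b)%nat.
Proof. unfold Nb, Ee. pose proof (bpow_pos b). apply Nat.le_trans with (2 ^ 2)%nat. simpl; lia.
  apply Nat.pow_le_mono_r; nia. Qed.

Lemma Cc_pos : 0 < Cc.
Proof. unfold Cc. apply Rdiv_lt_0_compat. lra. apply Rmult_lt_0_compat. lra.
  apply ln_pos'. assert (2 <= INR beta) by (replace 2 with (INR 2) by (simpl; lra); apply le_INR; auto). lra. Qed.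

Lemma cond_ii j n : (Nb (S (S j)) <= n)%nat -> 1 <= len Rbk L0c j * t n.
Proof.
  intros Hn. pose proof (Nb_ge (S (S j))).
  destruct (ht n ltac:(lia)) as [Ht _].
  assert (HN : 0 < INR (Nb (S (S j)))) by (apply lt_0_INR; lia).
  assert (Hle : INR (Nb (S (S j))) <= INR n) by (apply le_INR; auto).
  assert (H1 : Rpower (INR (Nb (S (S j)))) gamma <= Rpower (INR n) gamma) by (apply Rle_Rpower_l; lra).
  rewrite len_eq.
  assert (HE : Rpower (INR (Nb (S (S j)))) gamma = exp (gamma * (INR (Ee (S (S j))) * ln 2))).
  { unfold Nb. rewrite INR_pow2, pow2_exp. unfold Rpower. rewrite ln_exp. auto. }
  rewrite HE in H1.
  assert (HC1 : / 2 ^ A <= C1).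
  { assert (0 < 2 ^ A) by (apply pow_lt; lra). apply Rmult_le_reg_r with (2 ^ A); auto.
    rewrite Rinv_l by lra. lra. }
  assert (Hkey : INR (Ff j) + INR A <= gamma * INR (Ee (S (S j)))).
  { unfold Ff, Ee. rewrite !mult_INR, !pow_INR. simpl pow.
    pose proof (pos_INR beta). pose proof (pos_INR A). pose proof (pos_INR k0).
    assert (1 <= INR beta ^ j) by (apply pow_R1_Rle; replace 1 with (INR 1) by auto; apply le_INR; lia).
    set (X := INR beta ^ j) in *.
    assert (Hb2 : 2 <= INR beta) by (replace 2 with (INR 2) by (simpl; lra); apply le_INR; auto).
    assert (HY : 0 <= INR A * INR beta * X) by (apply Rmult_le_pos; [apply Rmult_le_pos|]; lra).
    assert (H5 : (INR k0 + 1) * (INR A * INR beta * X) <= gamma * INR beta * (INR A * INR beta * X))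
      by (apply Rmult_le_compat_r; lra).
    assert (H6 : INR A <= INR A * INR beta * X).
    { rewrite Rmult_assoc. rewrite <- (Rmult_1_r (INR A)) at 1. apply Rmult_le_compat_l. lra. nra. }
    replace (INR A * INR k0 * (INR beta * X)) with (INR k0 * (INR A * INR beta * X)) by ring.
    replace (gamma * (INR A * (INR beta * (INR beta * X)))) with (gamma * INR beta * (INR A * INR beta * X)) by ring.
    lra. }
  assert (Hl2 : 0 < ln 2) by (apply ln_pos'; lra).
  assert (Hp : 0 < 2 ^ Ff j) by (apply pow_lt; lra).
  assert (HpA : 0 < 2 ^ A) by (apply pow_lt; lra).
  assert (Hgoal : 2 ^ Ff j * 2 ^ A <= exp (gamma * (INR (Ee (S (S j))) * ln 2))).
  { rewrite !pow2_exp, <- exp_plus. apply exp_le'. nra. }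
  assert (HCt : 2 ^ Ff j <= t n).
  { apply Rle_trans with (C1 * (2 ^ Ff j * 2 ^ A)).
    - replace (C1 * (2 ^ Ff j * 2 ^ A)) with (2 ^ Ff j * (C1 * 2 ^ A)) by ring.
      rewrite <- (Rmult_1_r (2 ^ Ff j)) at 1. apply Rmult_le_compat_l; lra.
    - apply Rle_trans with (C1 * Rpower (INR n) gamma); auto. apply Rmult_le_compat_l; lra. }
  apply Rmult_le_reg_l with (2 ^ Ff j); auto. rewrite <- Rmult_assoc, Rinv_r by lra. lra.
Qed.

Lemma cond_i b n : (Nb b <= n < Nb (S b))%nat -> len Rbk L0c b * t n <= Cc / (INR n * ln (INR n)).
Proof.
  intros [Hn1 Hn2]. pose proof (Nb_ge b).
  assert (Hn3 : 3 <= INR n) by (replace 3 with (INR 3) by (simpl; lra); apply le_INR; lia).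
  assert (Hln : 0 < ln (INR n)) by (apply ln_pos'; lra).
  assert (Hlnn : ln (INR n) <= INR n) by (pose proof (ln_le_lin (INR n)); lra).
  destruct (ht n ltac:(lia)) as [_ Ht].
  assert (Hk3 : INR (k0 - 3) = INR k0 - 3) by (rewrite minus_INR by lia; simpl; lra).
  assert (Hpw : Rpower (INR n) gamma <= INR n ^ (k0 - 3)).
  { rewrite <- Rpower_pow by lra. apply Rle_Rpower. lra. lra. }
  set (E := Ee (S b)).
  assert (HnE : INR n <= 2 ^ E).
  { unfold E. rewrite <- INR_pow2. apply le_INR. unfold Nb in Hn2. lia. }
  assert (Hp1 : INR n ^ (k0 - 3) * INR n * INR n <= (2 ^ E) ^ (k0 - 1)).
  { replace (INR n ^ (k0 - 3) * INR n * INR n) with (INR n ^ (k0 - 1)).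
    apply pow_incr. lra. replace (k0 - 1)%nat with (S (S (k0 - 3))) by lia. simpl. ring. }
  rewrite <- pow_mult in Hp1.
  assert (HF : Ff b = (E * (k0 - 1) + E)%nat).
  { unfold E, Ff, Ee. remember (beta ^ S b)%nat as X. destruct k0 as [|k]. lia. replace (S k - 1)%nat with k by lia. ring. }
  assert (HEA : 2 ^ A <= 2 ^ E).
  { apply Rle_pow. lra. unfold E, Ee. pose proof (bpow_pos (S b)). nia. }
  assert (HC2 : C2 <= Cc * 2 ^ A).
  { pose proof Cc_pos. apply Rmult_le_reg_r with (/ Cc). apply Rinv_0_lt_compat; auto.
    replace (Cc * 2 ^ A * / Cc) with (2 ^ A) by (field; lra). auto. }
  assert (H2E : 0 < 2 ^ E) by (apply pow_lt; lra).
  assert (H2k : 0 < 2 ^ (E * (k0 - 1))) by (apply pow_lt; lra).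
  assert (HRp : 0 <= Rpower (INR n) gamma) by (unfold Rpower; left; apply exp_pos).
  assert (Ht0 : 0 <= t n).
  { destruct (ht n ltac:(lia)) as [Ht' _]. assert (0 < Rpower (INR n) gamma) by (unfold Rpower; apply exp_pos). nra. }
  assert (Hnl : 0 <= INR n * ln (INR n)) by nra.
  assert (Hmain : len Rbk L0c b * t n * (INR n * ln (INR n)) <= Cc).
  { rewrite len_eq, HF, pow_add.
    apply Rle_trans with (/ (2 ^ (E * (k0 - 1)) * 2 ^ E) * (C2 * 2 ^ (E * (k0 - 1)))).
    - rewrite Rmult_assoc. apply Rmult_le_compat_l. left; apply Rinv_0_lt_compat; nra.
      apply Rle_trans with (C2 * INR n ^ (k0 - 3) * (INR n * INR n)).
      + apply Rmult_le_compat. lra. lra. apply Rle_trans with (C2 * Rpower (INR n) gamma); auto.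
        apply Rmult_le_compat_l; lra. apply Rmult_le_compat_l; lra.
      + rewrite Rmult_assoc, <- (Rmult_assoc (INR n ^ (k0 - 3))). apply Rmult_le_compat_l; lra.
    - replace (/ (2 ^ (E * (k0 - 1)) * 2 ^ E) * (C2 * 2 ^ (E * (k0 - 1)))) with (C2 / 2 ^ E) by (field; lra).
      apply Rmult_le_reg_r with (2 ^ E); auto. unfold Rdiv. rewrite Rmult_assoc, Rinv_l by lra.
      pose proof Cc_pos. nra. }
  apply Rmult_le_reg_r with (INR n * ln (INR n)). nra.
  replace (Cc / (INR n * ln (INR n)) * (INR n * ln (INR n))) with Cc by (field; split; lra). lra.
Qed.

Lemma Nb_mono b : (Nb b <= Nb (S b))%nat.
Proof. unfold Nb. apply Nat.pow_le_mono_r. lia. unfold Ee. simpl. nia. Qed.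

Lemma cond_iii b : sm (fun i => Cc / (INR (Nb b + i) * ln (INR (Nb b + i)))) (Nb (S b) - Nb b) <= 1 / 112.
Proof.
  pose proof (Nb_ge b). pose proof (Nb_mono b).
  rewrite (sm_ext _ (fun i => Cc * (1 / (INR (Nb b + i) * ln (INR (Nb b + i)))))) by (intros; unfold Rdiv; ring).
  rewrite sm_scal. pose proof (band_sum (Nb b) (Nb (S b) - Nb b) ltac:(lia)) as HB.
  replace (Nb b + (Nb (S b) - Nb b))%nat with (Nb (S b)) in HB by lia.
  assert (Hl2 : 0 < ln 2) by (apply ln_pos'; lra).
  assert (HE : (2 <= Ee b)%nat) by (unfold Ee; pose proof (bpow_pos b); nia).
  assert (HEr : 2 <= INR (Ee b)) by (replace 2 with (INR 2) by (simpl; lra); apply le_INR; auto).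
  assert (HEE : INR (Ee (S b)) = INR beta * INR (Ee b)) by (unfold Ee; rewrite !mult_INR, !pow_INR; simpl; ring).
  assert (Hb2 : 2 <= INR beta) by (replace 2 with (INR 2) by (simpl; lra); apply le_INR; auto).
  assert (HN : INR (Nb b) = 2 ^ Ee b) by (unfold Nb; apply INR_pow2).
  assert (HN' : INR (Nb (S b)) = 2 ^ Ee (S b)) by (unfold Nb; apply INR_pow2).
  assert (HNb3 : 3 <= INR (Nb b)) by (replace 3 with (INR 3) by (simpl; lra); apply le_INR; auto).
  assert (HNb3' : 3 <= INR (Nb (S b))) by (replace 3 with (INR 3) by (simpl; lra); apply le_INR; pose proof (Nb_ge (S b)); auto).
  assert (U1 : ln (INR (Nb (S b)) - 1) <= INR (Ee (S b)) * ln 2).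
  { rewrite <- ln_pow by lra. rewrite <- HN'. apply ln_le'; lra. }
  assert (U1p : 0 < ln (INR (Nb (S b)) - 1)) by (apply ln_pos'; lra).
  assert (U2 : INR (Ee b) * ln 2 / 2 <= ln (INR (Nb b) - 1)).
  { apply Rle_trans with (ln (2 ^ Ee b / 2)).
    - unfold Rdiv. rewrite ln_mult, ln_pow, ln_Rinv by (try apply pow_lt; try apply Rinv_0_lt_compat; lra). nra.
    - apply ln_le'. apply Rdiv_lt_0_compat. apply pow_lt; lra. lra. rewrite HN in *. lra. }
  assert (U2p : 0 < INR (Ee b) * ln 2 / 2) by (apply Rdiv_lt_0_compat; nra).
  assert (V1 : ln (ln (INR (Nb (S b)) - 1)) <= ln (INR (Ee (S b)) * ln 2)) by (apply ln_le'; lra).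
  assert (V2 : ln (INR (Ee b) * ln 2 / 2) <= ln (ln (INR (Nb b) - 1))) by (apply ln_le'; lra).
  assert (V3 : ln (INR (Ee (S b)) * ln 2) - ln (INR (Ee b) * ln 2 / 2) = ln (2 * INR beta)).
  { rewrite <- (ln_exp (ln (INR (Ee (S b)) * ln 2) - ln (INR (Ee b) * ln 2 / 2))).
    f_equal. unfold Rminus. rewrite exp_plus, exp_Ropp, !exp_ln by nra. rewrite HEE. field. nra. }
  assert (Hsum : sm (fun i => 1 / (INR (Nb b + i) * ln (INR (Nb b + i)))) (Nb (S b) - Nb b) <= ln (2 * INR beta)) by lra.
  unfold Cc. assert (0 < ln (2 * INR beta)) by (apply ln_pos'; lra).
  apply Rle_trans with (1 / (112 * ln (2 * INR beta)) * ln (2 * INR beta)).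
  apply Rmult_le_compat_l. left; apply Rdiv_lt_0_compat; lra. auto. right; field; lra.
Qed.

Definition dlt n := Cc / (INR n * ln (INR n)).
Definition hit n b a := exists m : Z,
  INR a * len Rbk L0c b * t n - dlt n <= IZR m <= (INR a + 1) * len Rbk L0c b * t n + dlt n.
Definition Zc b a := (2 <= b)%nat /\ exists n, (Nb b <= n < Nb (S b))%nat /\ hit n b a.

Lemma M_len j : INR (Rbk (S j) * Rbk (S (S j))) * len Rbk L0c (S (S j)) = len Rbk L0c j.
Proof. unfold len. change (Qn Rbk (S (S j))) with (Qn Rbk j * Rbk (S j) * Rbk (S (S j)))%nat. rewrite !mult_INR.
  pose proof (Qn_INR_pos Rbk HRc j). pose proof (INR_Rb Rbk HRc j). pose proof (INR_Rb Rbk HRc (S j)).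
  field. repeat split; lra. Qed.

Lemma t_pos n : (1 <= n)%nat -> 0 < t n.
Proof. intros H. destruct (ht n H) as [H1 _]. assert (0 < Rpower (INR n) gamma) by (unfold Rpower; apply exp_pos). nra. Qed.

Lemma hit_count j u n : (Nb (S (S j)) <= n < Nb (S (S (S j))))%nat ->
  sm (fun i => ind (hit n (S (S j)) (u * (Rbk (S j) * Rbk (S (S j))) + i)%nat)) (Rbk (S j) * Rbk (S (S j)))
  <= 7 * INR (Rbk (S j) * Rbk (S (S j))) * dlt n + 3.
Proof.
  intros Hn. set (b := S (S j)). set (M := (Rbk (S j) * Rbk (S (S j)))%nat).
  pose proof (Nb_ge b).
  assert (Htn : 0 < t n) by (apply t_pos; unfold b in *; lia).
  pose proof (len_pos Rbk HRc L0c ltac:(unfold L0c; apply Rinv_0_lt_compat, pow_lt; lra) b) as Hlen.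
  set (h := len Rbk L0c b * t n).
  assert (Hh : 0 < h) by (unfold h; nra).
  assert (Hn3 : 3 <= INR n) by (replace 3 with (INR 3) by (simpl; lra); apply le_INR; unfold b in *; lia).
  assert (Hd : 0 < dlt n).
  { unfold dlt. apply Rdiv_lt_0_compat. apply Cc_pos. apply Rmult_lt_0_compat. lra. apply ln_pos'; lra. }
  assert (Hhd : h <= dlt n) by (apply cond_i; auto).
  assert (HMh : 1 <= INR M * h).
  { unfold h, M, b. rewrite <- Rmult_assoc, M_len. apply cond_ii. lia. }
  set (w := h + 2 * dlt n).
  destruct (least_ex (fun p => w <= INR p * h)) as [p [Hp Hpmin]].
  { destruct (INR_unbounded (w / h)) as [k Hk]. exists k. apply Rmult_le_reg_r with (/ h).
    apply Rinv_0_lt_compat; auto. rewrite Rmult_assoc, Rinv_r by lra. unfold Rdiv in Hk. lra. }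
  assert (Hp1 : INR p + 1 <= 3 + 2 * dlt n / h).
  { destruct p. simpl in Hp. unfold w in Hp. lra.
    assert (~ w <= INR p * h) by (apply Hpmin; lia). rewrite S_INR.
    assert (INR p * h < w) by lra.
    assert (INR p < w / h) by (apply Rmult_lt_reg_r with h; auto; unfold Rdiv; rewrite Rmult_assoc, Rinv_l by lra; lra).
    unfold w in H2. replace ((h + 2 * dlt n) / h) with (1 + 2 * dlt n / h) in H2 by (field; lra). lra. }
  eapply Rle_trans.
  - apply sm_le with (g := fun i => ind (exists m : Z, (INR (u * M) * h - dlt n) + INR i * h <= IZR m
                                         <= (INR (u * M) * h - dlt n) + INR i * h + w)).
    intros i _. apply ind_imp. intros [m [Hm1 Hm2]]. exists m. fold M in Hm1, Hm2. rewrite plus_INR in Hm1, Hm2. unfold w, h.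
    split.
    + replace (INR (u * M) * (len Rbk L0c b * t n) - dlt n + INR i * (len Rbk L0c b * t n))
        with ((INR (u * M) + INR i) * len Rbk L0c b * t n - dlt n) by ring. auto.
    + replace (INR (u * M) * (len Rbk L0c b * t n) - dlt n + INR i * (len Rbk L0c b * t n) + (len Rbk L0c b * t n + 2 * dlt n))
        with ((INR (u * M) + INR i + 1) * len Rbk L0c b * t n + dlt n) by ring. auto.
  - eapply Rle_trans. apply (window_count (INR (u * M) * h - dlt n) h w M p); auto. unfold w; lra.
    assert (Hy : / h <= INR M).
    { apply Rmult_le_reg_r with h; auto. rewrite Rinv_l by lra. lra. }
    assert (0 <= INR M * h + 1) by lra.
    apply Rle_trans with ((3 + 2 * dlt n / h) * (INR M * h + 1)). apply Rmult_le_compat_r; auto.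
    unfold Rdiv. replace ((3 + 2 * dlt n * / h) * (INR M * h + 1)) with (3 * (INR M * h) + 3 + 2 * dlt n * INR M + 2 * dlt n * / h)
      by (field; lra).
    assert (INR M * h <= INR M * dlt n) by (apply Rmult_le_compat_l; [apply pos_INR|lra]).
    assert (dlt n * / h <= dlt n * INR M) by (apply Rmult_le_compat_l; lra).
    change (INR (Rbk (S j) * Rbk b)) with (INR M). lra.
Qed.

Lemma HZc j u : (u < Qn Rbk j)%nat ->
  sm (fun i => ind (Zc (S (S j)) (u * (Rbk (S j) * Rbk (S (S j))) + i)%nat)) (Rbk (S j) * Rbk (S (S j)))
  <= INR (Rbk (S j) * Rbk (S (S j))) / 8.
Proof.
  intros _. set (b := S (S j)). set (M := (Rbk (S j) * Rbk b)%nat). set (Nmax := Nb (S b)).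
  assert (Hmono := Nb_mono b).
  eapply Rle_trans.
  { apply sm_le with (g := fun i => sm (fun n => ind ((Nb b <= n)%nat /\ hit n b (u * M + i)%nat)) Nmax).
    intros i _. destruct (classic (Zc b (u * M + i)%nat)) as [[_ [n [Hn Hh]]]|HZ].
    - rewrite ind_T by (split; [unfold b; lia| eauto]).
      eapply Rle_trans; [|apply (sm_single _ _ n)]. cbv beta. rewrite ind_T. lra. split; [lia|auto].
      intros; apply ind_01. unfold Nmax; lia.
    - rewrite ind_F by auto. apply sm_nonneg; intros; apply ind_01. }
  rewrite sm_swap.
  eapply Rle_trans.
  { apply sm_le with (g := fun n => ind (Nb b <= n)%nat * (7 * INR M * dlt n + 3)).
    intros n Hn. destruct (le_lt_dec (Nb b) n) as [Hbn|Hbn].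
    - rewrite ind_T by auto. rewrite Rmult_1_l.
      eapply Rle_trans; [|apply (hit_count j u n)].
      + apply sm_le; intros i _. apply ind_imp. tauto.
      + unfold Nmax, b in *. lia.
    - rewrite ind_F by lia. rewrite (sm_ext _ (fun _ => 0)). rewrite sm_const. lra.
      intros i _. apply ind_F. lia. }
  replace Nmax with (Nb b + (Nmax - Nb b))%nat by (unfold Nmax; lia).
  rewrite sm_add. rewrite (sm_ext (fun n => ind (Nb b <= n)%nat * (7 * INR M * dlt n + 3)) (fun _ => 0)).
  2:{ intros n Hn. rewrite ind_F by lia. ring. }
  rewrite sm_const. rewrite (sm_ext _ (fun i => 7 * INR M * dlt (Nb b + i)%nat + 3)).
  2:{ intros i _. rewrite ind_T by lia. ring. }
  rewrite sm_plus, sm_const, sm_scal.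
  pose proof (cond_iii b) as H3. unfold dlt. fold Nmax in H3.
  pose proof (cond_iv j) as H4. fold b in H4. unfold M. fold Nmax in H4.
  assert (H4' : 48 * INR Nmax <= INR (Rbk (S j) * Rbk b)).
  { replace 48 with (INR 48) by (simpl; lra). rewrite <- mult_INR. apply le_INR. auto. }
  assert (H5 : INR (Nmax - Nb b) <= INR Nmax) by (apply le_INR; lia).
  assert (0 <= 7 * INR (Rbk (S j) * Rbk b)) by (pose proof (pos_INR (Rbk (S j) * Rbk b)); lra).
  assert (7 * INR (Rbk (S j) * Rbk b) * sm (fun i => Cc / (INR (Nb b + i) * ln (INR (Nb b + i)))) (Nmax - Nb b)
          <= 7 * INR (Rbk (S j) * Rbk b) * (1 / 112)) by (apply Rmult_le_compat_l; auto).
  lra.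
Qed.

Lemma Nb_mono' b b' : (b <= b')%nat -> (Nb b <= Nb b')%nat.
Proof. induction 1. lia. pose proof (Nb_mono m). lia. Qed.

Lemma dist_int_hit (y d : R) : dist_int y <= d -> exists m : Z, y - d <= IZR m <= y + d.
Proof.
  unfold dist_int, frac_part. intros H. pose proof (base_Int_part y) as [B1 B2].
  unfold Rmin in H. destruct (Rle_dec (y - IZR (Int_part y)) (1 - (y - IZR (Int_part y)))).
  - exists (Int_part y). lra.
  - exists (Int_part y + 1)%Z. rewrite plus_IZR. lra.
Qed.

Lemma HZ0c a : ~ Zc 0 a.
Proof. intros [H _]. lia. Qed.
Lemma HZ1c a : ~ Zc 1 a.
Proof. intros [H _]. lia. Qed.

Lemma K_sub_E x : (forall L, Kset Rbk Zc L0c L x) ->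
  forall n, (Nb 2 <= n)%nat -> dist_int (x * t n) > Cc / (INR n * ln (INR n)).
Proof.
  intros HK n Hn.
  destruct (least_ex (fun b => (n < Nb (S b))%nat)) as [b [Hb1 Hb2]].
  { exists n. unfold Nb, Ee. apply Nat.lt_le_trans with (2 ^ n)%nat. apply Nat.pow_gt_lin_r; lia.
    apply Nat.pow_le_mono_r. lia. pose proof (Nat.pow_gt_lin_r beta (S n) ltac:(lia)). nia. }
  assert (Hb0 : (2 <= b)%nat).
  { destruct (le_lt_dec 2 b); auto. pose proof (Nb_mono' (S b) 2 ltac:(lia)). lia. }
  assert (Hb3 : (Nb b <= n)%nat).
  { destruct b. lia. destruct (le_lt_dec (Nb (S b)) n); auto. exfalso. apply (Hb2 b); auto. }
  destruct (HK b) as [a [Ta Ca]].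
  destruct (T_good Rbk Zc HZ0c HZ1c b a Ta) as [NZ _].
  apply Rnot_le_lt. intros Hd. apply NZ. split; auto. exists n. split. lia.
  destruct (dist_int_hit _ _ Hd) as [m Hm]. exists m. fold (dlt n) in Hm.
  assert (Htn : 0 < t n) by (apply t_pos; pose proof (Nb_ge 2); lia).
  destruct Ca as [Ca1 Ca2].
  split.
  - apply Rle_trans with (x * t n - dlt n). apply Rplus_le_compat_r. apply Rmult_le_compat_r; lra. lra.
  - apply Rle_trans with (x * t n + dlt n). lra. apply Rplus_le_compat_r. apply Rmult_le_compat_r; lra.
Qed.

Lemma sq_le j : INR j * INR j <= 2 * 2 ^ j.
Proof.
  induction j. simpl; lra.
  destruct (le_lt_dec 3 j).
  - rewrite S_INR. simpl. assert (3 <= INR j) by (replace 3 with (INR 3) by (simpl; lra); apply le_INR; auto). nra.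
  - destruct j. simpl; lra. destruct j. simpl; lra. destruct j. simpl; lra. lia.
Qed.

Lemma HJc s : 0 < s < 1 -> exists J0, forall j, (J0 < j)%nat -> 4 ^ j * Rpower (len Rbk L0c (j - 1)) (1 - s) <= 1.
Proof.
  intros Hs. destruct (INR_unbounded (4 / (1 - s))) as [J0 HJ0]. exists J0. intros j Hj.
  assert (HjR : 4 / (1 - s) < INR j) by (apply Rlt_le_trans with (INR J0); auto; apply le_INR; lia).
  rewrite len_eq. unfold Rpower. rewrite ln_Rinv by (apply pow_lt; lra). rewrite ln_pow by lra.
  replace 4 with (2 ^ 2) by (simpl; lra). rewrite <- pow_mult, pow2_exp. rewrite <- exp_plus.
  apply Rle_trans with (exp 0); [|rewrite exp_0; lra]. apply exp_le'.
  assert (Hl2 : 0 < ln 2) by (apply ln_pos'; lra).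
  assert (HF : 2 ^ j <= INR (Ff (j - 1))).
  { rewrite <- INR_pow2. apply le_INR. unfold Ff. replace (S (j - 1)) with j by lia.
    apply Nat.le_trans with (beta ^ j)%nat. apply Nat.pow_le_mono_l; lia.
    pose proof (bpow_pos j). remember (beta ^ j)%nat as X. assert (1 <= A * k0)%nat by nia. nia. }
  assert (Hsq := sq_le j).
  assert (H4 : 4 <= (1 - s) * INR j).
  { assert (4 / (1 - s) * (1 - s) <= INR j * (1 - s)) by (apply Rmult_le_compat_r; lra).
    replace (4 / (1 - s) * (1 - s)) with 4 in H by (field; lra). lra. }
  rewrite mult_INR. simpl (INR 2).
  assert (Hj0 : 0 <= INR j) by apply pos_INR.
  assert (2 * INR j <= (1 - s) * INR (Ff (j - 1))).
  { apply Rle_trans with ((1 - s) * 2 ^ j). 2:{ apply Rmult_le_compat_l; lra. }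
    apply Rmult_le_reg_r with 2. lra. nra. }
  nra.
Qed.
End Conc.

Lemma pow2_ge n : INR n <= 2 ^ n.
Proof. induction n. simpl; lra. rewrite S_INR. simpl. assert (1 <= 2 ^ n) by (apply pow_R1_Rle; lra). lra. Qed.

Lemma nat_ge_of_INR (k m : nat) : INR m < INR k -> (m <= k)%nat.
Proof. intros H. destruct (le_lt_dec m k); auto. apply lt_INR in l. lra. Qed.

Theorem theorem7 (C1 C2 gamma : R) (t : nat -> R)
  (hC1 : 0 < C1) (hC2 : 0 < C2) (hgamma : 0 < gamma)
  (ht : forall n : nat, (1 <= n)%nat ->
          C1 * Rpower (INR n) gamma <= t n <= C2 * Rpower (INR n) gamma) :
  exists (C : R) (n0 : nat), 0 < C /\ (2 <= n0)%nat /\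
    hausdorff_dim
      (fun xi : R => forall n : nat, (n0 <= n)%nat ->
         dist_int (xi * t n) > C / (INR n * ln (INR n)))
      1.
Proof.
  destruct (INR_unbounded (gamma + 4)) as [k0 Hk0].
  assert (Hk04 : (4 <= k0)%nat) by (apply nat_ge_of_INR; replace (INR 4) with 4 by (simpl; lra); lra).
  assert (Hk0g : gamma + 3 <= INR k0) by lra.
  assert (Hk0p : 0 < INR k0 + 1) by (pose proof (pos_INR k0); lra).
  destruct (INR_unbounded ((INR k0 + 1) / gamma + 2)) as [beta Hbeta].
  assert (Hq : 0 < (INR k0 + 1) / gamma) by (apply Rdiv_lt_0_compat; lra).
  assert (Hb2 : (2 <= beta)%nat) by (apply nat_ge_of_INR; replace (INR 2) with 2 by (simpl; lra); lra).
  assert (Hbg : INR k0 + 1 <= gamma * INR beta).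
  { assert ((INR k0 + 1) / gamma * gamma <= INR beta * gamma) by (apply Rmult_le_compat_r; lra).
    replace ((INR k0 + 1) / gamma * gamma) with (INR k0 + 1) in H by (field; lra). lra. }
  pose proof (Cc_pos beta Hb2) as HC.
  destruct (INR_unbounded (Rmax (C2 / Cc beta) (1 / C1) + 6)) as [A HA].
  assert (HM1 := Rmax_l (C2 / Cc beta) (1 / C1)). assert (HM2 := Rmax_r (C2 / Cc beta) (1 / C1)).
  assert (H1C : 0 < 1 / C1) by (apply Rdiv_lt_0_compat; lra).
  assert (HA6 : (6 <= A)%nat) by (apply nat_ge_of_INR; replace (INR 6) with 6 by (simpl; lra); lra).
  pose proof (pow2_ge A) as HpA.
  assert (HA1 : C2 / Cc beta <= 2 ^ A) by lra.
  assert (HA2 : 1 <= C1 * 2 ^ A).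
  { assert (1 / C1 <= 2 ^ A) by lra. apply Rmult_le_compat_l with (r := C1) in H; [|lra].
    replace (C1 * (1 / C1)) with 1 in H by (field; lra). auto. }
  exists (Cc beta), (Nb beta A 2).
  split; auto. split. pose proof (Nb_ge k0 beta A Hk04 Hb2 HA6 2); lia.
  set (E := fun xi : R => forall n : nat, (Nb beta A 2 <= n)%nat ->
         dist_int (xi * t n) > Cc beta / (INR n * ln (INR n))).
  split.
  - intros s Hs0 Hnull. destruct (Rlt_le_dec s 1) as [Hs1|Hs1]; [|auto]. exfalso.
    destruct (Req_dec s 0) as [Hs|Hs].
    + subst. destruct (Hnull 1 1) as [U [r [Hr [_ Hsum]]]]; try lra.
      specialize (Hsum 0%nat). simpl in Hsum. rewrite Rpower_O in Hsum by (apply Hr). lra.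
    + assert (Hs' : 0 < s < 1) by lra.
      destruct (HJc k0 beta A Hk04 Hb2 HA6 s Hs') as [J0 HJ].
      apply (Kinf_not_null (Rbk k0 beta A) (HRc k0 beta A Hk04 Hb2 HA6) (Zc k0 beta A t)
               (HZ0c k0 beta A Hk04 Hb2 HA6 t) (HZ1c k0 beta A Hk04 Hb2 HA6 t)
               (HZc k0 beta A Hk04 Hb2 HA6 C1 C2 gamma t hC1 hC2 hgamma ht Hk0g Hbg HA1 HA2)
               (L0c k0 beta A) ltac:(unfold L0c; apply Rinv_0_lt_compat, pow_lt; lra) s J0 Hs' HJ).
      intros delta eps Hd He. destruct (Hnull delta eps Hd He) as [U [r [Hr [Hcov Hsum]]]].
      exists U, r. split; auto. split; auto. intros x Hx. apply Hcov.
      intros n Hn. apply (K_sub_E k0 beta A Hk04 Hb2 HA6 C1 C2 gamma t hC1 ht x Hx n Hn).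
  - intros b Hb. apply Rnot_lt_le. intros Hb1.
    assert (1 < (1 + b) / 2) by lra.
    pose proof (Hb ((1 + b) / 2) ltac:(lra) (null_big _ E H)). lra.
Qed.
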